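(* Let $n,d$ be positive integers, let $\mathcal{C}\subseteq S_n$ be an $(n,d)$-permutation code under the block permutation metric, and let $\mathcal{F}=\{A(\pi):\pi\in\mathcal{C}\}$. Then $$|\mathcal{F}|\leqslant \frac{\binom{n}{d}\binom{n}{d}(n-d)!}{\binom{n-1}{n-d}}.$$
   Context: $S_n$ is the symmetric group on $[n]$, permutations written $\pi=(\pi(1),\dots,\pi(n))$. The characteristic set of $\pi$ is $A(\pi)=\{(\pi(i),\pi(i+1)):1\leqslant i<n\}$. The block permutation distance is $d_B(\pi_1,\pi_2)=|A(\pi_1)\setminus A(\pi_2)|$ (equivalently, $d_B(\pi_1,\pi_2)+1$ is the minimum number of consecutive segments into which $\pi_1$ must be cut so that $\pi_2$ is obtained by rearranging these segments). An $(n,d)$-permutation code is a subset $\mathcal{C}\subseteq S_n$ with $d_B(\pi,\sigma)\geqslant d$ for all distinct $\pi,\sigma\in\mathcal{C}$. *)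

(* Defs.v *)
From mathcomp Require Import all_boot all_order all_algebra.
From mathcomp Require Import fingroup perm.
Set Implicit Arguments. Unset Strict Implicit. Unset Printing Implicit Defensive.

(* Permutations of [n] are modelled as 'S_n = {perm 'I_n} (0-indexed). *)

Definition charset (n : nat) (p : 'S_n) : {set 'I_n * 'I_n} :=
  [set x | [exists i : 'I_n, exists j : 'I_n,
            (val j == (val i).+1) && (x == (p i, p j))]].

Definition dB (n : nat) (p q : 'S_n) : nat := #|charset p :\: charset q|.

Definition is_perm_code (n d : nat) (C : {set 'S_n}) : Prop :=
  forall p q : 'S_n, p \in C -> q \in C -> p != q -> d <= dB p q.

(* Main.v *)
Require Import Defs.
From mathcomp Require Import all_boot all_order all_algebra.
From mathcomp Require Import fingroup perm.
Import GRing.Theory Num.Theory.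

Definition pinj {n} (S : {set 'I_n * 'I_n}) :=
  [forall x in S, forall y in S, ((x.1 == y.1) || (x.2 == y.2)) ==> (x == y)].

Lemma G_bound n (x0 : 'I_n) k :
  #|[set S : {set 'I_n * 'I_n} | (#|S| == k) && pinj S]| <= 'C(n, k) * n ^_ k.
Proof.
pose Phi (Xf : {set 'I_n} * {ffun 'I_k -> 'I_n}) :=
  [set (nth x0 (enum Xf.1) i, Xf.2 i) | i : 'I_k].
pose D := setX [set X : {set 'I_n} | #|X| == k] [set f : {ffun 'I_k -> 'I_n} | injectiveb f].
have -> : 'C(n, k) * n ^_ k = #|D|.
  by rewrite cardsX card_draws card_ord card_inj_ffuns !card_ord.
apply: leq_trans (leq_imset_card Phi D).
apply: subset_leq_card; apply/subsetP => S; rewrite inE => /andP[/eqP cS pS].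
have pS' : forall x y, x \in S -> y \in S -> (x.1 == y.1) || (x.2 == y.2) -> x = y.
  move=> x y xS yS e; move/forall_inP: pS => /(_ x xS) /forall_inP /(_ y yS).
  by rewrite e => /eqP.
pose X := [set s.1 | s in S].
have cX : #|X| = k.
  rewrite -cS; apply: card_in_imset => x y xS yS e; apply: pS' => //.
  by rewrite e eqxx.
pose f := [ffun i : 'I_k => odflt x0 [pick y | (nth x0 (enum X) i, y) \in S]].
have key : forall i : 'I_k, (nth x0 (enum X) i, f i) \in S.
  move=> i; have : nth x0 (enum X) i \in X.
    by rewrite -mem_enum mem_nth // -cardE cX.
  case/imsetP => s sS e; rewrite ffunE e.
  case: pickP => [y /= //|/(_ s.2) /=]; by rewrite -surjective_pairing sS.
have finj : injective f.
  move=> i j e.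
  have := pS' _ _ (key i) (key j); rewrite e eqxx orbT => /(_ isT) [] /eqP.
  rewrite nth_uniq ?enum_uniq // -?cardE ?cX //.
  by move/eqP/val_inj.
apply/imsetP; exists (X, f).
  by rewrite inE /= !inE cX eqxx; apply/injectiveP.
apply/eqP; rewrite eq_sym eqEcard; apply/andP; split.
  by apply/subsetP => x /imsetP [i _ ->]; apply: key.
rewrite card_imset ?card_ord ?cS //.
by move=> i j [] _; apply: finj.
Qed.

From mathcomp Require Import zify.

Lemma charset_card m (p : 'S_m.+1) : #|charset p| = m.
Proof.
have -> : charset p =
  [set (p (widen_ord (leqnSn m) i), p (lift ord0 i)) | i : 'I_m].
  apply/setP => x; rewrite inE; apply/existsP/imsetP.
    case=> i /existsP [j /andP [/eqP hj /eqP ->]].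
    have hi : i < m by have := ltn_ord j; rewrite hj.
    exists (Ordinal hi) => //; congr pair; congr (p _); apply: val_inj => //=.
  case=> i _ ->; exists (widen_ord (leqnSn m) i); apply/existsP.
  exists (lift ord0 i); rewrite eqxx andbT /= /bump leq0n add1n //.
rewrite card_imset ?card_ord // => i j [] /perm_inj e _.
by apply: val_inj; exact: (congr1 val e).
Qed.

Lemma charset_pinj n (p : 'S_n) : pinj (charset p).
Proof.
apply/forall_inP => x; rewrite inE => /existsP [i /existsP [j /andP [/eqP hj /eqP ->]]].
apply/forall_inP => y; rewrite inE => /existsP [i' /existsP [j' /andP [/eqP hj' /eqP ->]]].
apply/implyP => /orP [] /eqP /perm_inj e.
  have e' : j = j' by apply: val_inj; rewrite hj hj' e.
  by rewrite e e'.
have e' : i = i' by apply: val_inj; apply/eqP; rewrite -eqSS -hj -hj' e.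
by rewrite e e'.
Qed.

Lemma pinj_sub n (S A : {set 'I_n * 'I_n}) : S \subset A -> pinj A -> pinj S.
Proof.
move=> /subsetP sSA /forall_inP pA; apply/forall_inP => x xS.
have /forall_inP pAx := pA x (sSA x xS).
by apply/forall_inP => y yS; apply: pAx; apply: sSA.
Qed.

Theorem mainTheorem7 (n d : nat) (hn : 0 < n) (hd : 0 < d) (hdn : d <= n)
    (C : {set 'S_n}) :
  is_perm_code d C ->
  ((#|[set charset p | p in C]|%:R : rat)
    <= ('C(n, d) * 'C(n, d) * (n - d)`!)%:R / ('C(n.-1, n - d))%:R)%R.
Proof.
move: hn hdn; case: n C => // m C _ hdm hC.
set F := [set charset p | p in C]; set k := m.+1 - d.
pose P := [set AS : {set 'I_m.+1 * 'I_m.+1} * {set 'I_m.+1 * 'I_m.+1} |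
            [&& AS.1 \in F, AS.2 \subset AS.1 & #|AS.2| == k]].
have cP : #|P| = #|F| * 'C(m, k).
  have -> : #|P| = \sum_(A in F) \sum_(S : {set 'I_m.+1 * 'I_m.+1} | (S \subset A) && (#|S| == k)) 1.
    rewrite pair_big_dep /= sum1_card; apply: eq_card => -[A S].
    by rewrite inE /= unfold_in /= -topredE /= andbA.
  rewrite -sum_nat_const; apply: eq_bigr => A AF.
  rewrite sum1_card; case/imsetP: AF => p _ ->.
  have -> : 'C(m, k) = 'C(#|charset p|, k) by rewrite charset_card.
  rewrite -cards_draws; apply: eq_card => S.
  by rewrite !inE.
have PG : #|P| <= #|[set S : {set 'I_m.+1 * 'I_m.+1} | (#|S| == k) && pinj S]|.
  rewrite -(card_in_imset (f := snd)).
    apply: subset_leq_card; apply/subsetP => S /imsetP [[A S'] HP ->].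
    rewrite inE in HP; case/and3P: HP => /= AF sA cS.
    rewrite inE cS /=; apply: pinj_sub sA _.
    by case/imsetP: AF => p _ ->; apply: charset_pinj.
  move=> [A S] [B S'] HA HB /= eS; subst S'.
  rewrite !inE /= in HA HB.
  case/and3P: HA => AF sA cS; case/and3P: HB => BF sB _.
  case/imsetP: AF => p pC eA; case/imsetP: BF => q qC eB.
  case: (eqVneq p q) => [e | ne]; first by rewrite eA eB e.
  have := hC p q pC qC ne; rewrite /dB -eA -eB.
  have := cardsID B A; rewrite eA charset_card -eA.
  have : #|S| <= #|A :&: B| by apply: subset_leq_card; rewrite subsetI sA sB.
  move: cS; rewrite /k => /eqP; move=> h1 h2 h3 h4; rewrite h1 in h2; exfalso; move: h2 h3 h4 hdm; clear; lia.
have GB := G_bound _ (@ord0 m) k.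
rewrite /= ler_pdivlMr; last by rewrite ltr0n bin_gt0 /k; lia.
rewrite -natrM ler_nat -/k -cP.
apply: (leq_trans PG); apply: (leq_trans GB).
rewrite -bin_ffact mulnA bin_sub //.
Qed.
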